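(* Let $A\in\mathbb R^{n\times n}$ be Hurwitz, $B\in\mathbb R^n$, $0<P,Q\in\mathrm S^n$ with $Q=-(A^\top P+PA)$, $\mathscr b>0$ and fix $\gamma\in(0,1)$. Define, for $\alpha>0$, the convergence rate $c_{\mathrm e}(\alpha)=g(\alpha\mathscr b\gamma,Q,PB)/\lambda_{\max}(P)$. Then there exists a nonempty interval $\mathcal J=(0,\sup\mathcal J)$ on which $\alpha\mapsto c_{\mathrm e}(\alpha)$ is strictly increasing if and only if $g(1,Q,PB)>\lambda_{\min}(Q)$. Moreover, if $n\ge2$, then $c_{\mathrm e}(\alpha)\le\lambda_{\max}(Q)/\lambda_{\max}(P)$ for all $\alpha>0$; and if $g(1,Q,PB)>\lambda_{\min}(Q)$ fails, then $c_{\mathrm e}(\alpha)=\lambda_{\min}(Q)/\lambda_{\max}(P)$ for all $\alpha>0$.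
   Context: $\mathrm S^n$: real symmetric $n\times n$ matrices; $g(\phi,Q,v)=\lambda_{\min}(Q+\phi\,vv^\top)$. In the paper, $\mathscr b=\inf_x\beta(x)^\top K_{\mathrm b}\beta(x)$ and $\alpha$ scales the gain $K=\alpha K_{\mathrm b}$ of the static update law $\hat W=K\beta(e)B^\top Pe$, and $c_{\mathrm e}$ is the exponential rate in the transient bound on $\|e(t)\|$. *)

(* Defs.v *)
From HB Require Import structures.
From mathcomp Require Import all_boot all_order all_algebra.
From mathcomp Require Import complex reals.
From Stdlib Require Import ClassicalEpsilon.
Set Implicit Arguments. Unset Strict Implicit. Unset Printing Implicit Defensive.
Import Order.TTheory GRing.Theory Num.Theory.
Local Open Scope ring_scope.

Section Defs.
Variable R : realType.

Definition symmetric n (M : 'M[R]_n) : Prop := M^T = M.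

Definition posdef n (M : 'M[R]_n) : Prop :=
  symmetric M /\ forall x : 'cV[R]_n, x != 0 -> 0 < (x^T *m M *m x) 0 0.

Definition hurwitz n (A : 'M[R]_n) : Prop :=
  forall z : R[i], eigenvalue (map_mx (fun x : R => (x%:C)%C) A) z ->
    complex.Re z < 0.

Definition is_lambda_min n (M : 'M[R]_n) (m : R) : Prop :=
  eigenvalue M m /\ forall b, eigenvalue M b -> m <= b.
Definition is_lambda_max n (M : 'M[R]_n) (m : R) : Prop :=
  eigenvalue M m /\ forall b, eigenvalue M b -> b <= m.

Definition lambda_min n (M : 'M[R]_n) : R :=
  epsilon (inhabits 0) (is_lambda_min M).
Definition lambda_max n (M : 'M[R]_n) : R :=
  epsilon (inhabits 0) (is_lambda_max M).

Definition g n (phi : R) (Q : 'M[R]_n) (v : 'cV[R]_n) : R :=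
  lambda_min (Q + phi *: (v *m v^T)).

Definition c_e n (b gamma : R) (P Q : 'M[R]_n) (B : 'cV[R]_n) (alpha : R) : R :=
  g (alpha * b * gamma) Q (P *m B) / lambda_max P.

End Defs.

(* Main.v *)
From HB Require Import structures.
From mathcomp Require Import all_boot all_order all_algebra.
From mathcomp Require Import complex reals.
From Stdlib Require Import ClassicalEpsilon.
Require Import Defs.
From mathcomp Require Import ring lra.
Import Order.TTheory GRing.Theory Num.Theory.
Local Open Scope ring_scope.
Local Open Scope sesquilinear_scope.

Section Spec.
Variable R : realType.
Local Notation C := (R[i]).
Local Notation f := (real_complex R).

Lemma conj_f (x : R) : (f x)^* = f x.
Proof. apply: conj_Creal; by rewrite complex_real. Qed.

Lemma diag_form_ge0 n (w : 'cV[C]_n) (e : 'rV[C]_n) :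
  (forall i, 0 <= e 0 i) -> 0 <= ((w ^t*) *m diag_mx e *m w) 0 0.
Proof.
move=> he; rewrite -mulmxA mul_diag_mx mxE; apply: sumr_ge0 => i _.
rewrite !mxE mulrCA mulrC; apply: mulr_ge0 => //.
by rewrite mulrC -normCK exprn_ge0.
Qed.

Lemma map_real_form n (M : 'M[R]_n) (x : 'cV[R]_n) :
  let xc := map_mx f x in
  ((xc ^t*) *m map_mx f M *m xc) 0 0 = f ((x^T *m M *m x) 0 0).
Proof.
move=> xc; have -> : xc ^t* = map_mx f x^T.
  by apply/matrixP => i j; rewrite !mxE conj_f.
by rewrite -!map_mxM mxE.
Qed.


Lemma rayleigh n (M : 'M[R]_n) : M^T = M ->
  exists dr : 'rV[R]_n,
    (forall i, eigenvalue M (dr 0 i)) /\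
    (forall c : R, (forall i, c <= dr 0 i) -> forall x : 'cV_n,
        c * (x^T *m x) 0 0 <= (x^T *m M *m x) 0 0) /\
    (forall c : R, (forall i, dr 0 i <= c) -> forall x : 'cV_n,
        (x^T *m M *m x) 0 0 <= c * (x^T *m x) 0 0).
Proof.
move=> sM; set Mc := map_mx f M.
have hM : Mc \is hermsymmx.
  rewrite is_hermitianmxE expr0 scale1r; apply/eqP/matrixP => i j.
  by rewrite !mxE conj_f -[in LHS]sM mxE.
have /orthomx_spectralP eM := hermitian_normalmx hM.
set U := spectralmx Mc in eM; set d := spectral_diag Mc in eM.
have Uu : U \is unitarymx by apply: spectral_unitarymx.
have Uunit : U \in unitmx by apply: spectral_unit.
have UtU : U ^t* *m U = 1%:M by rewrite -invmx_unitary // mulVmx.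
have dreal : forall i, d 0 i \is Num.real.
  by move=> i; have /mxOverP := hermitian_spectral_diag_real hM; apply.
exists (map_mx (@complex.Re R) d).
have dE : forall i, d 0 i = f ((map_mx (@complex.Re R) d) 0 i).
  by move=> i; rewrite mxE RRe_real.
have psd : forall (N : 'M[R]_n) (e : 'rV[C]_n), (forall i, 0 <= e 0 i) ->
    map_mx f N = U^t* *m diag_mx e *m U ->
    forall x : 'cV_n, 0 <= (x^T *m N *m x) 0 0.
  move=> N e he hN x; rewrite -ler0c -map_real_form hN.
  set xc := map_mx f x.
  have -> : xc ^t* *m (U ^t* *m diag_mx e *m U) *m xc
           = (U *m xc) ^t* *m diag_mx e *m (U *m xc).
    by rewrite trmx_mul map_mxM !mulmxA.
  exact: diag_form_ge0.
have expand : forall (N : 'M[R]_n) c (x : 'cV_n),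
    (x^T *m (N - c%:M) *m x) 0 0 = (x^T *m N *m x) 0 0 - c * (x^T *m x) 0 0.
  move=> N c x; rewrite mulmxBr mulmxBl mul_mx_scalar -scalemxAl !mxE.
  by [].
have expand2 : forall (N : 'M[R]_n) c (x : 'cV_n),
    (x^T *m (c%:M - N) *m x) 0 0 = c * (x^T *m x) 0 0 - (x^T *m N *m x) 0 0.
  move=> N c x; rewrite mulmxBr mulmxBl mul_mx_scalar -scalemxAl !mxE.
  by [].
split.
  move=> i; rewrite eigenvalue_root_char -(fmorph_root f) map_char_poly.
  rewrite -/Mc; set z := (X in root _ X).
  have -> : z = d 0 i by rewrite /z /= mxE RRe_real.
  rewrite -eigenvalue_root_char; apply/eigenvalueP.
  exists (row i U).
    have UM : U *m Mc = diag_mx d *m U.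
      by rewrite eM !mulmxA mulmxV // mul1mx.
    by rewrite -row_mul UM row_mul row_diag_mx -scalemxAl -rowE.
  apply/eqP => h0; have := row_mul i U (U^t*).
  rewrite h0 mul0mx (unitarymxP Uu) => /rowP/(_ i); rewrite !mxE eqxx /=.
  by move/eqP; rewrite oner_eq0.
split.
  move=> c hc x; rewrite -subr_ge0 -expand.
  apply: (psd _ (d - const_mx (f c))).
    by move=> i; rewrite !mxE dE -rmorphB ler0c subr_ge0 hc.
  rewrite map_mxB /= map_scalar_mx -/Mc eM invmx_unitary //.
  rewrite linearB /= diag_const_mx mulmxBr mulmxBl mul_mx_scalar -scalemxAl UtU.
  by rewrite scalemx1.
move=> c hc x; rewrite -subr_ge0 -expand2.
apply: (psd _ (const_mx (f c) - d)).
  by move=> i; rewrite !mxE dE -rmorphB ler0c subr_ge0 hc.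
rewrite map_mxB /= map_scalar_mx -/Mc eM invmx_unitary //.
rewrite linearB /= diag_const_mx mulmxBr mulmxBl mul_mx_scalar -scalemxAl UtU.
by rewrite scalemx1.
Qed.

Lemma xx_ge0 n (x : 'cV[R]_n) : 0 <= (x^T *m x) 0 0.
Proof. rewrite mxE; apply: sumr_ge0 => i _; rewrite mxE -expr2; exact: sqr_ge0. Qed.

Lemma xx_gt0 n (x : 'cV[R]_n) : x != 0 -> 0 < (x^T *m x) 0 0.
Proof.
move=> hx; rewrite lt_def xx_ge0 andbT; apply/eqP => h.
move: hx; rewrite mxE in h.
have h' : forall i : 'I_n, true -> x^T 0 i * x i 0 = 0.
  by apply: psumr_eq0P h => k _; rewrite mxE -expr2 sqr_ge0.
case/eqP; apply/matrixP => i j; rewrite (ord1 j) mxE.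
by have := h' i isT; rewrite mxE -expr2 => /eqP; rewrite sqrf_eq0 => /eqP.
Qed.

Lemma eig_form n (M : 'M[R]_n) b (v : 'rV[R]_n) : v *m M = b *: v ->
  ((v^T)^T *m M *m v^T) 0 0 = b * ((v^T)^T *m v^T) 0 0.
Proof. by move=> h; rewrite trmxK h -scalemxAl mxE. Qed.

Lemma lmin_spec n (M : 'M[R]_n) : M^T = M -> (0 < n)%N ->
  (forall x : 'cV_n, lambda_min M * (x^T *m x) 0 0 <= (x^T *m M *m x) 0 0) /\
  exists x : 'cV_n, x != 0 /\ (x^T *m M *m x) 0 0 = lambda_min M * (x^T *m x) 0 0.
Proof.
move=> sM n0; have [dr [he [hlo _]]] := rayleigh _ _ sM.
pose i0 := Ordinal n0.
case: (@arg_minP _ _ _ i0 xpredT (fun i => dr 0 i) isT) => i _ hi.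
set m := dr 0 i.
have mlo : forall b, eigenvalue M b -> m <= b.
  move=> b /eigenvalueP [v hv v0].
  have hx : v^T != 0 by apply: contra v0 => /eqP h; rewrite -(trmxK v) h trmx0.
  have := hlo m (fun j => hi j isT) v^T; rewrite (eig_form _ _ _ _ hv).
  by rewrite ler_pM2r // xx_gt0.
have hm : is_lambda_min M m by split => //; apply: he.
have hl : is_lambda_min M (lambda_min M).
  by rewrite /lambda_min; apply: epsilon_spec; exists m.
have -> : lambda_min M = m.
  by apply/le_anti; rewrite (proj2 hl m (proj1 hm)) mlo //; case: hl.
split; first by apply: hlo => j; apply: hi.
have /eigenvalueP [v hv v0] := he i.
exists v^T; split; last by rewrite (eig_form _ _ _ _ hv).
by apply: contra v0 => /eqP h; rewrite -(trmxK v) h trmx0.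
Qed.

Lemma lmax_spec n (M : 'M[R]_n) : M^T = M -> (0 < n)%N ->
  (forall x : 'cV_n, (x^T *m M *m x) 0 0 <= lambda_max M * (x^T *m x) 0 0) /\
  exists x : 'cV_n, x != 0 /\ (x^T *m M *m x) 0 0 = lambda_max M * (x^T *m x) 0 0.
Proof.
move=> sM n0; have [dr [he [_ hhi]]] := rayleigh _ _ sM.
pose i0 := Ordinal n0.
case: (@arg_maxP _ _ _ i0 xpredT (fun i => dr 0 i) isT) => i _ hi.
set m := dr 0 i.
have mhi : forall b, eigenvalue M b -> b <= m.
  move=> b /eigenvalueP [v hv v0].
  have hx : v^T != 0 by apply: contra v0 => /eqP h; rewrite -(trmxK v) h trmx0.
  have := hhi m (fun j => hi j isT) v^T; rewrite (eig_form _ _ _ _ hv).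
  by rewrite ler_pM2r // xx_gt0.
have hm : is_lambda_max M m by split => //; apply: he.
have hl : is_lambda_max M (lambda_max M).
  by rewrite /lambda_max; apply: epsilon_spec; exists m.
have -> : lambda_max M = m.
  by apply/le_anti; rewrite (proj2 hm _ (proj1 hl)) (proj2 hl m (proj1 hm)).
split; first by apply: hhi => j; apply: hi.
have /eigenvalueP [v hv v0] := he i.
exists v^T; split; last by rewrite (eig_form _ _ _ _ hv).
by apply: contra v0 => /eqP h; rewrite -(trmxK v) h trmx0.
Qed.

End Spec.
Arguments xx_gt0 {R n x}.
Arguments xx_ge0 {R n}.
Arguments lmin_spec {R n M}.
Arguments lmax_spec {R n M}.

Section G.
Variable R : realType.
Variable n : nat.
Variable Q : 'M[R]_n.
Variable v : 'cV[R]_n.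
Hypothesis sQ : Q^T = Q.
Hypothesis n0 : (0 < n)%N.

Local Notation G phi := (g phi Q v).
Local Notation q x := ((x^T *m Q *m x) 0 0).
Local Notation s x := ((v^T *m x) 0 0).
Local Notation xx x := ((x^T *m x) 0 0).

Lemma formE (x : 'cV[R]_n) phi :
  (x^T *m (Q + phi *: (v *m v^T)) *m x) 0 0 = q x + phi * (s x) ^+ 2.
Proof.
rewrite mulmxDr mulmxDl -scalemxAr -scalemxAl.
rewrite [X in X = _]mxE; congr (_ + _).
rewrite mxE; congr (_ * _).
rewrite (mulmxA x^T v v^T) -(mulmxA (x^T *m v)) mxE big_ord1 expr2; congr (_ * _).
by rewrite -[x^T *m v]trmxK trmx_mul trmxK mxE.
Qed.

Lemma sym_phi phi : (Q + phi *: (v *m v^T))^T = Q + phi *: (v *m v^T).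
Proof. by rewrite linearD /= linearZ /= trmx_mul trmxK sQ. Qed.

Lemma G_le phi (x : 'cV[R]_n) : G phi * xx x <= q x + phi * (s x) ^+ 2.
Proof. rewrite -formE; exact: (proj1 (lmin_spec (sym_phi phi) n0)). Qed.

Lemma G_eig phi : exists x : 'cV[R]_n, x != 0 /\ q x + phi * (s x) ^+ 2 = G phi * xx x.
Proof.
have [x [x0 hx]] := proj2 (lmin_spec (sym_phi phi) n0).
by exists x; split => //; rewrite -formE.
Qed.

Lemma G_mono a c : 0 <= a -> a <= c -> G a <= G c.
Proof.
move=> a0 ac; have [x [x0 hx]] := G_eig c.
have hp := xx_gt0 x0; have h1 := G_le a x.
have hs := sqr_ge0 (s x).
rewrite -(ler_pM2r hp); nra.
Qed.

Lemma G_conc a c x : 0 <= a -> a < c -> c < x ->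
  (c - a) * G x <= (x - a) * G c - (x - c) * G a.
Proof.
move=> a0 ac cx; have [y [y0 hy]] := G_eig c.
have hp := xx_gt0 y0; have h1 := G_le x y; have h2 := G_le a y.
rewrite -(ler_pM2r hp); nra.
Qed.

Lemma G_lin : exists K, 0 <= K /\ forall phi, G phi <= G 0 + phi * K.
Proof.
have [x [x0 hx]] := G_eig 0.
have hp := xx_gt0 x0.
exists ((s x) ^+ 2 / xx x); split; first by rewrite divr_ge0 // ?sqr_ge0 ?ltW.
move=> phi; have h := G_le phi x; rewrite mul0r addr0 in hx.
rewrite -(ler_pM2r hp) mulrDl -mulrA divfK ?gt_eqF //; nra.
Qed.

End G.

Lemma orth_vec (R : realType) n (v : 'cV[R]_n) : (2 <= n)%N ->
  exists x : 'cV[R]_n, x != 0 /\ (v^T *m x) 0 0 = 0.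
Proof.
move=> n2; have n0 : (0 < n)%N by apply: leq_trans n2.
pose i0 := Ordinal n0; pose i1 := Ordinal n2.
have hd : forall k, (v^T *m delta_mx k (0 : 'I_1)) 0 0 = v k 0.
  by move=> k; rewrite -colE !mxE.
have i01 : i0 != i1 by []. have i10 : i1 != i0 by [].
have [h0|hn] := boolP ((v i0 0 == 0) && (v i1 0 == 0)).
  case/andP: h0 => /eqP h0 _; exists (delta_mx i0 0); split; last by rewrite hd.
  apply/negP => /eqP/matrixP/(_ i0 0); rewrite !mxE !eqxx /= => /eqP.
  by rewrite oner_eq0.
exists (v i1 0 *: delta_mx i0 0 - v i0 0 *: delta_mx i1 0); split.
  apply/negP => /eqP/matrixP h; move: hn; rewrite negb_and => /orP[] /eqP []. 
    move: (h i1 0); rewrite !mxE eqxx (negbTE i10) /=.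
    by rewrite mulr0 mulr1 sub0r => /eqP; rewrite oppr_eq0 => /eqP.
  move: (h i0 0); rewrite !mxE eqxx (negbTE i01) /=.
  by rewrite mulr0 mulr1 subr0.
move: (hd i0) (hd i1); rewrite mulmxBr -!scalemxAr !mxE => -> ->.
by rewrite mulrC subrr.
Qed.

Theorem corollary1 (R : realType) (n : nat) (A : 'M[R]_n) (B : 'cV[R]_n)
  (P Q : 'M[R]_n) (b gamma : R) :
  (0 < n)%N ->
  hurwitz A ->
  posdef P -> posdef Q ->
  Q = - (A^T *m P + P *m A) ->
  0 < b ->
  0 < gamma < 1 ->
  [/\ (exists s : R, 0 < s /\
         forall a1 a2 : R, 0 < a1 -> a1 < a2 -> a2 < s ->
           c_e b gamma P Q B a1 < c_e b gamma P Q B a2)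
      <-> lambda_min Q < g 1 Q (P *m B),
      (2 <= n)%N ->
        forall alpha : R, 0 < alpha ->
          c_e b gamma P Q B alpha <= lambda_max Q / lambda_max P
    & ~ (lambda_min Q < g 1 Q (P *m B)) ->
        forall alpha : R, 0 < alpha ->
          c_e b gamma P Q B alpha = lambda_min Q / lambda_max P].
Proof.
move=> n0 _ [sP Ppos] [sQ Qpos] _ b0 /andP[ga0 ga1].
set v := P *m B.
have Gmono := G_mono R n Q v sQ n0.
have Gconc := G_conc R n Q v sQ n0.
have cE : forall al, c_e b gamma P Q B al = g (al * b * gamma) Q v / lambda_max P.
  by [].
have g0E : g 0 Q v = lambda_min Q by rewrite /g scale0r addr0.
have Lpos : 0 < lambda_max P.
  have [x [x0 hx]] := proj2 (lmax_spec sP n0).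
  have := Ppos x x0; rewrite hx => h.
  by rewrite -(pmulr_lgt0 _ (xx_gt0 x0)).
have bg0 : 0 < b * gamma by rewrite mulr_gt0.
have const : ~ (lambda_min Q < g 1 Q v) -> forall phi, 0 <= phi ->
    g phi Q v = lambda_min Q.
  move=> /negP; rewrite -g0E -leNgt => h10 phi phi0.
  apply/le_anti; rewrite (Gmono 0 phi (lexx 0) phi0) andbT.
  have [phi1|phi1] := leP phi 1.
    by apply: le_trans h10; apply: Gmono.
  have := Gconc 0 1 phi (lexx 0) ltr01 phi1.
  rewrite !subr0 mul1r => h; apply: (le_trans h).
  have := ler_wpM2l (ltW (lt_trans ltr01 phi1)) h10; lra.
split.
- split.
  + move=> [s [s0 hs]]; apply: contraT => /negP hn.
    have s3 : 0 < s / 3 by lra.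
    have s32 : s / 3 < s / 2 by lra.
    have s2 : s / 2 < s by lra.
    have := hs (s / 3) (s / 2) s3 s32 s2.
    rewrite !cE (const hn (s / 3 * b * gamma)); last first.
      by rewrite -mulrA mulr_ge0 // ltW.
    rewrite (const hn (s / 2 * b * gamma)) ?ltxx //.
    by rewrite -mulrA mulr_ge0 // ltW // (lt_trans s3 s32).
  + move=> hlt; rewrite -g0E in hlt.
    have [K [K0 hK]] := G_lin R n Q v sQ n0.
    set D := (g 1 Q v - g 0 Q v) / (2 * (K + 1)).
    have D0 : 0 < D by apply: divr_gt0; lra.
    have DE : D * (2 * (K + 1)) = g 1 Q v - g 0 Q v.
      by rewrite /D divfK //; apply/negP => /eqP; lra.
    set p := D / (1 + D).
    have pE : p * (1 + D) = D by rewrite /p divfK //; apply/negP => /eqP; lra.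
    have p0 : 0 < p by apply: divr_gt0; lra.
    have p1 : p < 1 by rewrite /p ltr_pdivrMr ?mul1r; lra.
    have pD : p < D.
      rewrite /p ltr_pdivrMr; last lra.
      rewrite mulrDr mulr1 ltrDl; exact: mulr_gt0.
    have Gp : g p Q v < g 1 Q v.
      have := hK p; have := ler_wpM2r K0 (ltW pD).
      have : D * K < D * (2 * (K + 1)) by rewrite ltr_pM2l //; lra.
      rewrite DE; lra.
    exists (p / (b * gamma)); split; first by apply: divr_gt0.
    move=> a1 a2 a10 a12 a2s.
    rewrite !cE ltr_pM2r ?invr_gt0 //.
    have q10 : 0 < a1 * b * gamma by rewrite -mulrA mulr_gt0.
    have q12 : a1 * b * gamma < a2 * b * gamma by rewrite -!mulrA ltr_pM2r.
    have q2p : a2 * b * gamma < p by rewrite -mulrA -ltr_pdivlMr.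
    rewrite lt_neqAle (Gmono _ _ (ltW q10) (ltW q12)) andbT.
    apply/negP => /eqP heq.
    have := Gconc _ _ 1 (ltW q10) q12 (lt_trans q2p p1).
    rewrite -heq => h.
    have h2 : g 1 Q v <= g (a1 * b * gamma) Q v.
      move: h; set X := g (a1 * b * gamma) Q v.
      have -> : (1 - a1 * b * gamma) * X - (1 - a2 * b * gamma) * X
              = (a2 * b * gamma - a1 * b * gamma) * X by ring.
      by rewrite ler_pM2l // subr_gt0.
    have h3 := Gmono (a1 * b * gamma) p (ltW q10) (ltW (lt_trans q12 q2p)).
    by have := le_lt_trans (le_trans h2 h3) Gp; rewrite ltxx.
- move=> n2 al al0; rewrite cE ler_pM2r ?invr_gt0 //.
  have [x [x0 hx]] := orth_vec _ _ v n2.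
  have h1 := G_le R n Q v sQ n0 (al * b * gamma) x.
  rewrite hx expr0n /= mulr0 addr0 in h1.
  have h2 := proj1 (lmax_spec sQ n0) x.
  by rewrite -(ler_pM2r (xx_gt0 x0)); apply: le_trans h2.
- move=> hn al al0; by rewrite cE const // -mulrA; apply: mulr_ge0; apply: ltW.
Qed.
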